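(* Let \(X\) be a nonempty set and let \(\Phi\) be a mapping with domain \(X^{2}\). Then the following conditions are equivalent. (i) There is a totally ordered set \(Q\) such that \(\Phi\) is combinatorially similar to a \(Q\)-ultrametric. (ii) There is a poset \(Q\) such that \(\Phi\) is combinatorially similar to a \(Q\)-ultrametric. (iii) \(\Phi\) is symmetric, the transitive closure \(u_{\Phi}^{t}\) of \(u_{\Phi}\) is antisymmetric, there is \(a_0 \in \Phi(X^{2})\) with \(\Phi^{-1}(a_0) = \Delta_{X}:=\{\langle x,x\rangle:x\in X\}\), and for every triple \(\langle x_1, x_2, x_3\rangle\) of points of \(X\) there is a permutation \((i_1,i_2,i_3)\) of \((1,2,3)\) such that \(\Phi(x_{i_1}, x_{i_2}) = \Phi(x_{i_2}, x_{i_3})\). (iv) There is \(b_0 \in \Phi(X^{2})\) such that \(\Phi^{-1}(b_0) = \Delta_{X}\), the binary relation \(\preccurlyeq_{\Phi} := u_{\Phi}^{t} \cup \Delta_{\Phi(X^{2})}\) is a partial order on \(\Phi(X^{2})\), \(b_0\) is the smallest element of \((\Phi(X^{2}), \preccurlyeq_{\Phi})\), and \(\Phi\) is a \(\preccurlyeq_{\Phi}\)-ultrametric on \(X\).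
   Context: For a mapping \(F\) with domain \(A\), \(F(A)\) denotes its range; \(\Delta_S=\{\langle s,s\rangle: s\in S\}\). Let \((Q,\preccurlyeq_Q)\) be a poset with a smallest element \(q_0\) and \(Z\) a nonempty set. A mapping \(d\colon Z^2\to Q\) is a \(Q\)-pseudoultrametric (= \(\preccurlyeq_Q\)-pseudoultrametric) if \(d\) is symmetric, \(d(z,z)=q_0\) for all \(z\in Z\), and for every triple \(\langle z_1,z_2,z_3\rangle\) of points of \(Z\) there is a permutation \((i_1,i_2,i_3)\) of \((1,2,3)\) with \(d(z_{i_1},z_{i_3})\preccurlyeq_Q d(z_{i_1},z_{i_2})\) and \(d(z_{i_1},z_{i_2})=d(z_{i_2},z_{i_3})\); it is a \(Q\)-ultrametric (= \(\preccurlyeq_Q\)-ultrametric) if moreover \(d(x,y)=q_0\) iff \(x=y\). For nonempty sets \(X,Y\) and mappings \(\Phi\) with domain \(X^2\), \(\Psi\) with domain \(Y^2\), \(\Phi\) is combinatorially similar to \(\Psi\) if there are bijections \(f\colon \Phi(X^2)\to\Psi(Y^2)\) and \(g\colon Y\to X\) with \(\Psi(x,y)=f(\Phi(g(x),g(y)))\) for all \(x,y\in Y\). For \(\Phi\) with domain \(X^2\) and \(Y=\Phi(X^2)\), \(\langle y_1,y_2\rangle\in u_\Phi\) iff \(y_1,y_2\in Y\) and there are \(x_1,x_2,x_3\in X\) with \(y_1=\Phi(x_1,x_3)\) and \(y_2=\Phi(x_1,x_2)=\Phi(x_2,x_3)\). The transitive closure is \(\gamma^t=\bigcup_{n\ge1}\gamma^n\)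 with \(\gamma^{n+1}=\gamma^n\circ\gamma\), where \(\langle x,y\rangle\in\alpha\circ\beta\) iff there is \(z\) with \(\langle x,z\rangle\in\alpha\), \(\langle z,y\rangle\in\beta\). *)

(* Defs.v *)
From mathcomp Require Import all_boot.
From mathcomp Require Import fingroup perm.

Set Implicit Arguments.
Unset Strict Implicit.
Unset Printing Implicit Defensive.

Definition trip {X : Type} (x1 x2 x3 : X) (i : 'I_3) : X :=
  match val i with 0 => x1 | 1 => x2 | _ => x3 end.

Definition i0 : 'I_3 := @Ordinal 3 0 isT.
Definition i1 : 'I_3 := @Ordinal 3 1 isT.
Definition i2 : 'I_3 := @Ordinal 3 2 isT.

Definition rng {X A : Type} (Phi : X -> X -> A) (a : A) : Prop :=
  exists x y, Phi x y = a.

Definition is_poset {Q : Type} (le : Q -> Q -> Prop) : Prop :=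
  (forall q, le q q) /\
  (forall p q, le p q -> le q p -> p = q) /\
  (forall p q r, le p q -> le q r -> le p r).

Definition is_toset {Q : Type} (le : Q -> Q -> Prop) : Prop :=
  is_poset le /\ (forall p q, le p q \/ le q p).

Definition is_smallest {Q : Type} (le : Q -> Q -> Prop) (q0 : Q) : Prop :=
  forall q, le q0 q.

Definition is_Q_pseudoultrametric {Z Q : Type} (le : Q -> Q -> Prop) (q0 : Q)
  (d : Z -> Z -> Q) : Prop :=
  (forall z1 z2, d z1 z2 = d z2 z1) /\
  (forall z, d z z = q0) /\
  (forall z1 z2 z3 : Z, exists s : {perm 'I_3},
     let z := trip z1 z2 z3 in
     le (d (z (s i0)) (z (s i2))) (d (z (s i0)) (z (s i1))) /\
     d (z (s i0)) (z (s i1)) = d (z (s i1)) (z (s i2))).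

Definition is_Q_ultrametric {Z Q : Type} (le : Q -> Q -> Prop) (q0 : Q)
  (d : Z -> Z -> Q) : Prop :=
  is_Q_pseudoultrametric le q0 d /\ (forall x y, d x y = q0 <-> x = y).

(* Phi (domain X^2) is combinatorially similar to Psi (domain Y^2):
   bijections f : Phi(X^2) -> Psi(Y^2) and g : Y -> X with
   Psi(x,y) = f(Phi(g x, g y)). f is given as a map A -> B that restricts
   to a bijection from the range of Phi onto the range of Psi. *)
Definition comb_similar {X A Y B : Type} (Phi : X -> X -> A) (Psi : Y -> Y -> B)
  : Prop :=
  exists (f : A -> B) (g : Y -> X),
    (forall a, rng Phi a -> rng Psi (f a)) /\
    (forall a1 a2, rng Phi a1 -> rng Phi a2 -> f a1 = f a2 -> a1 = a2) /\
    (forall b, rng Psi b -> exists2 a, rng Phi a & f a = b) /\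
    bijective g /\
    (forall x y, Psi x y = f (Phi (g x) (g y))).

Definition u_rel {X A : Type} (Phi : X -> X -> A) (y1 y2 : A) : Prop :=
  rng Phi y1 /\ rng Phi y2 /\
  exists x1 x2 x3, y1 = Phi x1 x3 /\ y2 = Phi x1 x2 /\ y2 = Phi x2 x3.

Definition rel_comp {A : Type} (al be : A -> A -> Prop) (x y : A) : Prop :=
  exists z, al x z /\ be z y.

Fixpoint rel_pow {A : Type} (ga : A -> A -> Prop) (n : nat) : A -> A -> Prop :=
  match n with
  | 0 => ga            (* gamma^1 *)
  | n'.+1 => rel_comp (rel_pow ga n') ga
  end.

Definition trans_clos {A : Type} (ga : A -> A -> Prop) (x y : A) : Prop :=
  exists n, rel_pow ga n x y.

Definition le_Phi {X A : Type} (Phi : X -> X -> A) (y1 y2 : A) : Prop :=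
  trans_clos (u_rel Phi) y1 y2 \/ (y1 = y2 /\ rng Phi y1).

Definition partial_order_on {A : Type} (S : A -> Prop) (R : A -> A -> Prop) : Prop :=
  (forall a b, R a b -> S a /\ S b) /\
  (forall a, S a -> R a a) /\
  (forall a b, S a -> S b -> R a b -> R b a -> a = b) /\
  (forall a b c, S a -> S b -> S c -> R a b -> R b c -> R a c).

(* Main.v *)
Require Import Defs.
From mathcomp Require Import all_boot.
From mathcomp Require Import fingroup perm.
From mathcomp Require Import boolp classical_sets.
From Stdlib Require Import Classical.

Local Open Scope classical_set_scope.

Lemma szpilrajn (Q : Type) (le : Q -> Q -> Prop) : is_poset le ->
  exists le', is_toset le' /\ (forall p q, le p q -> le' p q).
Proof.
move=> [Lr [La Lt]].
pose P := fun S : set (Q*Q) => is_poset (fun a b => le a b \/ S (a,b)).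
have [|A [HA Hmax]] := @Zorn_bigcup (Q*Q) P.
  move=> F FP Ftot.
  set U := \bigcup_(X in F) X.
  have common : forall a b c d, (le a b \/ U (a,b)) -> (le c d \/ U (c,d)) ->
     (le a b /\ le c d) \/ exists X, F X /\ (le a b \/ X (a,b)) /\ (le c d \/ X (c,d)).
    move=> a b c d [h1|[X FX h1]] [h2|[Y FY h2]].
    - by left.
    - by right; exists Y; split; [|split]; auto.
    - by right; exists X; split; [|split]; auto.
    - case: (Ftot X Y FX FY) => sub.
      + by right; exists Y; split; [|split]; auto.
      + by right; exists X; split; [|split]; auto.
  have XU : forall X a b, F X -> le a b \/ X (a,b) -> le a b \/ U (a,b).
    move=> X a b FX [h|h]; [by left| right; by exists X].
  split; [|split].
  - by move=> q; left.
  - move=> p q h1 h2; case: (common _ _ _ _ h1 h2) => [[]|[X [FX [g1 g2]]]].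
      exact: La.
    by have [_ [XA _]] := FP X FX; apply: XA.
  - move=> p q r h1 h2; case: (common _ _ _ _ h1 h2) => [[g1 g2]|[X [FX [g1 g2]]]].
      by left; apply: Lt g1 g2.
    have [_ [_ XT]] := FP X FX; apply: (XU X) => //; exact: XT g1 g2.
exists (fun a b => le a b \/ A (a,b)); split; last by move=> p q h; left.
split => //.
move=> p q.
set R := fun a b => le a b \/ A (a,b).
have [Rr [Ra Rt]] : is_poset R := HA.
case: (classic (R p q)) => [h|npq]; first by left.
case: (classic (R q p)) => [h|nqp]; first by right.
exfalso.
pose B := fun z : Q * Q => A z \/ (R z.1 p /\ R q z.2).
apply: (Hmax B).
  split; first by move=> z h; left.
  move=> sub; apply: npq; right; apply: sub; right; split; [apply: Rr|apply: Rr].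
have E : forall a b, (le a b \/ B (a,b)) <-> (R a b \/ (R a p /\ R q b)).
  move=> a b; rewrite /B /R /=; tauto.
split; [|split].
- by move=> a; left.
- move=> a b /E h1 /E h2.
  case: h1 => [h1|[h1 h1']]; case: h2 => [h2|[h2 h2']].
  + exact: Ra.
  + by exfalso; apply: nqp; apply: Rt h2' (Rt _ _ _ h1 h2).
  + by exfalso; apply: nqp; apply: Rt h1' (Rt _ _ _ h2 h1).
  + by exfalso; apply: nqp; apply: Rt h1' h2.
- move=> a b c /E h1 /E h2; apply/E.
  case: h1 => [h1|[h1 h1']]; case: h2 => [h2|[h2 h2']].
  + by left; apply: Rt h1 h2.
  + by right; split => //; apply: Rt h1 h2.
  + by right; split => //; apply: Rt h1' h2.
  + by exfalso; apply: nqp; apply: Rt h1' h2.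
Qed.

Lemma trip_map (X Y : Type) (h : X -> Y) x1 x2 x3 i :
  trip (h x1) (h x2) (h x3) i = h (trip x1 x2 x3 i).
Proof. by rewrite /trip; case: (val i) => [|[|[|]]]. Qed.

Lemma perm3_cases (s : {perm 'I_3}) :
  let t := (val (s i0), val (s i1), val (s i2)) in
  t = (0,1,2) \/ t = (0,2,1) \/ t = (1,0,2) \/ t = (1,2,0) \/ t = (2,0,1) \/ t = (2,1,0).
Proof.
have n01 : val (s i0) != val (s i1) by rewrite val_eqE (inj_eq perm_inj).
have n02 : val (s i0) != val (s i2) by rewrite val_eqE (inj_eq perm_inj).
have n12 : val (s i1) != val (s i2) by rewrite val_eqE (inj_eq perm_inj).
have l0 := ltn_ord (s i0); have l1 := ltn_ord (s i1); have l2 := ltn_ord (s i2).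
move: n01 n02 n12 l0 l1 l2 => /=.
case: (val (s i0)) => [|[|[|a]]]; case: (val (s i1)) => [|[|[|b]]];
  case: (val (s i2)) => [|[|[|c]]] //=; tauto.
Qed.

Lemma ord3 (j : 'I_3) : j = i0 \/ j = i1 \/ j = i2.
Proof.
case: j => [[|[|[|m]]] Hm]; [left|right;left|right;right|done]; exact: val_inj.
Qed.

Lemma perm3_cases' (s : {perm 'I_3}) :
  let t := (s i0, s i1, s i2) in
  t = (i0,i1,i2) \/ t = (i0,i2,i1) \/ t = (i1,i0,i2) \/ t = (i1,i2,i0) \/ t = (i2,i0,i1) \/ t = (i2,i1,i0).
Proof.
have ne : forall a b, s a = s b -> a = b by move=> a b; apply: perm_inj.
move: (ord3 (s i0)) (ord3 (s i1)) (ord3 (s i2)) => /=.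
move=> [e0|[e0|e0]] [e1|[e1|e1]] [e2|[e2|e2]]; rewrite e0 e1 e2; try tauto;
 first [ move: (ne _ _ (etrans e0 (esym e1))) => /(congr1 val) //
       | move: (ne _ _ (etrans e0 (esym e2))) => /(congr1 val) //
       | move: (ne _ _ (etrans e1 (esym e2))) => /(congr1 val) //].
Qed.

Lemma rel_pow_ind (A : Type) (ga P : A -> A -> Prop) :
  (forall x y, ga x y -> P x y) -> (forall x y z, P x y -> P y z -> P x z) ->
  forall n x y, rel_pow ga n x y -> P x y.
Proof.
move=> H1 H2; elim => [|n IH] x y /=; first exact: H1.
by case=> z [h1 h2]; apply: H2 (IH _ _ h1) (H1 _ _ h2).
Qed.

Lemma tc_ind (A : Type) (ga P : A -> A -> Prop) :
  (forall x y, ga x y -> P x y) -> (forall x y z, P x y -> P y z -> P x z) ->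
  forall x y, trans_clos ga x y -> P x y.
Proof. by move=> H1 H2 x y [n h]; apply: rel_pow_ind H1 H2 n x y h. Qed.

Lemma tc_trans (A : Type) (ga : A -> A -> Prop) x y z :
  trans_clos ga x y -> trans_clos ga y z -> trans_clos ga x z.
Proof.
move=> h [m]; elim: m z => [|m IH] z /=.
  by case: h => n hn g; exists n.+1; exists y.
case=> w [h1 h2]; case: (IH _ h1) => k hk; exists k.+1; by exists w.
Qed.

Lemma u_rng (X A : Type) (Phi : X -> X -> A) a b :
  trans_clos (u_rel Phi) a b -> rng Phi a /\ rng Phi b.
Proof.
apply: (@tc_ind _ _ (fun a b => rng Phi a /\ rng Phi b)).
  by move=> x y [? [? _]].
by move=> x y z [? _] [_ ?].
Qed.

Section Main.
Variables (X A : Type) (Phi : X -> X -> A).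

Definition C1 := (exists (Q : Type) (le : Q -> Q -> Prop) (q0 : Q) (Z : Type) (d : Z -> Z -> Q),
       is_toset le /\ is_smallest le q0 /\ inhabited Z /\
       is_Q_ultrametric le q0 d /\ comb_similar Phi d).
Definition C2 := (exists (Q : Type) (le : Q -> Q -> Prop) (q0 : Q) (Z : Type) (d : Z -> Z -> Q),
       is_poset le /\ is_smallest le q0 /\ inhabited Z /\
       is_Q_ultrametric le q0 d /\ comb_similar Phi d).
Definition C3 := ((forall x y, Phi x y = Phi y x) /\
     (forall a b, trans_clos (u_rel Phi) a b -> trans_clos (u_rel Phi) b a -> a = b) /\
     (exists a0, rng Phi a0 /\ forall x y, Phi x y = a0 <-> x = y) /\
     (forall x1 x2 x3 : X, exists s : {perm 'I_3},
        let x := trip x1 x2 x3 in Phi (x (s i0)) (x (s i1)) = Phi (x (s i1)) (x (s i2)))).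
Definition C4 := (exists b0, rng Phi b0 /\ (forall x y, Phi x y = b0 <-> x = y) /\
       partial_order_on (rng Phi) (le_Phi Phi) /\
       (forall b, rng Phi b -> le_Phi Phi b0 b) /\
       is_Q_ultrametric (le_Phi Phi) b0 Phi).

Lemma c1c2 : C1 -> C2.
Proof.
case=> Q [le [q0 [Z [d [[H1 _] H]]]]].
by exists Q, le, q0, Z, d.
Qed.

Lemma c2c1 : C2 -> C1.
Proof.
case=> Q [le [q0 [Z [d [Hp [Hs [HZ [[[Hsym [Hdiag Htri]] Hiff] Hc]]]]]]]].
have [le' [Ht Hsub]] := @szpilrajn _ _ Hp.
exists Q, le', q0, Z, d; split => //; split; first by move=> q; apply: Hsub.
split => //; split => //; split => //; split => //; split => //.
move=> z1 z2 z3; have [s [h1 h2]] := Htri z1 z2 z3.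
by exists s; split => //; apply: Hsub.
Qed.

Lemma c3c4 : C3 -> C4.
Proof.
case=> Hsym [Hanti [[a0 [Ha0r Ha0]] Htri]].
have Hpo1 : forall a b, le_Phi Phi a b -> rng Phi a /\ rng Phi b.
  by move=> a b [h|[-> h]]; [exact: u_rng|].
exists a0; split => //; split => //; split; [|split].
- split => //; split; first by move=> a ha; right.
  split.
  + move=> a b _ _ [h1|[e1 _]] [h2|[e2 _]]; [exact: Hanti h1 h2|by []|by []|by []].
  + move=> a b c ra _ _ [h1|[e1 _]] [h2|[e2 _]].
    * by left; apply: tc_trans h1 h2.
    * by rewrite -e2; left.
    * by rewrite e1; left.
    * by right; split; [rewrite e1 e2|].
- move=> b [x [y <-]].
  case: (classic (x = y)) => [<-|nxy].
    right; split. symmetry; exact: (proj2 (Ha0 _ _) erefl). exact: Ha0r.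
  left; exists 0 => /=; split; first exact: Ha0r.
  split; first by exists x, y.
  exists x, y, x; split; first by symmetry; exact: (proj2 (Ha0 _ _) erefl).
  by split.
- split; last exact: Ha0.
  split => //; split; first by move=> z; exact: (proj2 (Ha0 _ _) erefl).
  move=> x1 x2 x3; have [s Hs] := Htri x1 x2 x3.
  exists s; cbv zeta in Hs |- *; split => //.
  left; exists 0 => /=; split; first by eexists; eexists.
  split; first by eexists; eexists.
  by do 3 eexists; split; [reflexivity|split; [reflexivity|exact: Hs]].
Qed.

Lemma c4c3 : C4 -> C3.
Proof.
case=> b0 [Hr [Hiff [[Hpo1 [Hpo2 [Hpo3 Hpo4]]] [Hsm [[Hsym [Hdiag Htri]] Hiff2]]]]].
split => //; split.
  move=> a b h1 h2.
  have [ra rb] := @u_rng _ _ _ _ _ h1.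
  by apply: Hpo3 => //; left.
split; first by exists b0.
move=> x1 x2 x3; have [s [_ h]] := Htri x1 x2 x3; by exists s.
Qed.

Lemma c4c2 : C4 -> C2.
Proof.
case=> b0 [Hr [Hiff [[Hpo1 [Hpo2 [Hpo3 Hpo4]]] [Hsm [[Hsym [Hdiag Htri]] Hiff2]]]]].
have [x0 [y0 _]] := Hr.
pose le := fun a b => a = b0 \/ le_Phi Phi a b \/ a = b.
exists A, le, b0, X, Phi; split; [|split; [|split; [|split]]].
- split; [|split].
  + by move=> q; right; right.
  + move=> a b [->|[h1| ->]] [h2|[h2|h2]] //.
    * have [rb _] := Hpo1 _ _ h2; apply: Hpo3 => //; exact: Hsm.
    * by have [ra rb] := Hpo1 _ _ h1; apply: Hpo3 => //; rewrite h2; apply: Hsm.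
    * by have [ra rb] := Hpo1 _ _ h1; apply: Hpo3.
  + move=> a b c [->|[h1| ->]] h2; first by left.
    * have [ra rb] := Hpo1 _ _ h1.
      case: h2 => [e|[h2| <-]].
      - left; subst b; apply: Hpo3 => //; exact: Hsm.
      - have [_ rc] := Hpo1 _ _ h2; right; left; exact: Hpo4 h1 h2.
      - by right; left.
    * exact: h2.
- by move=> q; left.
- by constructor; exact: x0.
- split; last exact: Hiff2.
  split => //; split => //.
  move=> z1 z2 z3; have [s [h1 h2]] := Htri z1 z2 z3.
  by exists s; split => //; right; left.
- exists id, id; split; [|split; [|split; [|split]]] => //.
  + by move=> b hb; exists b.
  + by exists id.
Qed.

Lemma c2c3 : C2 -> C3.
Proof.
case=> Q [le [q0 [Z [d [[Lr [La Lt]] [Hs [[z0] [[[dsym [ddiag dtri]] diff]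
  [f [g [Hf1 [Hf2 [Hf3 [[h gh hg] Hfd]]]]]]]]]]]]]].
have Ed : forall x y, d (h x) (h y) = f (Phi x y) by move=> x y; rewrite Hfd !hg.
have R : forall x y, rng Phi (Phi x y) by move=> x y; exists x, y.
have Hsym : forall x y, Phi x y = Phi y x.
  by move=> x y; apply: Hf2 => //; rewrite -!Ed dsym.
split => //; split; [|split].
- have key : forall a b, trans_clos (u_rel Phi) a b ->
      le (f a) (f b) /\ rng Phi a /\ rng Phi b.
    apply: (@tc_ind _ _ (fun a b => le (f a) (f b) /\ rng Phi a /\ rng Phi b)); last first.
      by move=> a b c [h1 [ra _]] [h2 [_ rc]]; split; [exact: Lt h1 h2|].
    move=> a b [ra [rb [x1 [x2 [x3 [ea [eb1 eb2]]]]]]].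
    split => //.
    have [s [H1 H2]] := dtri (h x1) (h x2) (h x3).
    have E13 : d (h x1) (h x3) = f a by rewrite Ed ea.
    have E31 : d (h x3) (h x1) = f a by rewrite Ed Hsym ea.
    have E12 : d (h x1) (h x2) = f b by rewrite Ed eb1.
    have E21 : d (h x2) (h x1) = f b by rewrite Ed Hsym eb1.
    have E23 : d (h x2) (h x3) = f b by rewrite Ed eb2.
    have E32 : d (h x3) (h x2) = f b by rewrite Ed Hsym eb2.
    move: H1 H2.
    case: (perm3_cases' s) => [|[|[|[|[|]]]]] [-> -> ->] /=;
      rewrite ?E13 ?E31 ?E12 ?E21 ?E23 ?E32 => H1 H2;
      first [exact H1 | (rewrite H2 in H1; exact H1) | (rewrite -H2 in H1; exact H1)
            | (rewrite H2; apply: Lr) | (rewrite -H2; apply: Lr)].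
  move=> a b h1 h2.
  have [l1 [ra rb]] := key _ _ h1; have [l2 _] := key _ _ h2.
  by apply: Hf2 => //; apply: La.
- exists (Phi (g z0) (g z0)); split => // x y.
  have F0 : f (Phi (g z0) (g z0)) = q0 by rewrite -Hfd.
  split.
    move=> e; have : d (h x) (h y) = q0 by rewrite Ed e.
    by move/diff => e'; rewrite -(hg x) -(hg y) e'.
  move=> <-; apply: Hf2 => //; rewrite F0 -Ed; exact: ddiag.
- move=> x1 x2 x3; have [s [_ H2]] := dtri (h x1) (h x2) (h x3).
  exists s; cbv zeta in H2 |- *.
  rewrite !trip_map !Ed in H2.
  by apply: Hf2.
Qed.

End Main.
Theorem corollary3p19 (X A : Type) (HX : inhabited X) (Phi : X -> X -> A) :
  [/\
   ((exists (Q : Type) (le : Q -> Q -> Prop) (q0 : Q) (Z : Type) (d : Z -> Z -> Q),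
       is_toset le /\ is_smallest le q0 /\ inhabited Z /\
       is_Q_ultrametric le q0 d /\ comb_similar Phi d) <->
    (exists (Q : Type) (le : Q -> Q -> Prop) (q0 : Q) (Z : Type) (d : Z -> Z -> Q),
       is_poset le /\ is_smallest le q0 /\ inhabited Z /\
       is_Q_ultrametric le q0 d /\ comb_similar Phi d)),
   ((exists (Q : Type) (le : Q -> Q -> Prop) (q0 : Q) (Z : Type) (d : Z -> Z -> Q),
       is_poset le /\ is_smallest le q0 /\ inhabited Z /\
       is_Q_ultrametric le q0 d /\ comb_similar Phi d) <->
    ((forall x y, Phi x y = Phi y x) /\
     (forall a b, trans_clos (u_rel Phi) a b -> trans_clos (u_rel Phi) b a -> a = b) /\
     (exists a0, rng Phi a0 /\ forall x y, Phi x y = a0 <-> x = y) /\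
     (forall x1 x2 x3 : X, exists s : {perm 'I_3},
        let x := trip x1 x2 x3 in Phi (x (s i0)) (x (s i1)) = Phi (x (s i1)) (x (s i2)))))
 &
   (((forall x y, Phi x y = Phi y x) /\
     (forall a b, trans_clos (u_rel Phi) a b -> trans_clos (u_rel Phi) b a -> a = b) /\
     (exists a0, rng Phi a0 /\ forall x y, Phi x y = a0 <-> x = y) /\
     (forall x1 x2 x3 : X, exists s : {perm 'I_3},
        let x := trip x1 x2 x3 in Phi (x (s i0)) (x (s i1)) = Phi (x (s i1)) (x (s i2)))) <->
    (exists b0, rng Phi b0 /\ (forall x y, Phi x y = b0 <-> x = y) /\
       partial_order_on (rng Phi) (le_Phi Phi) /\
       (forall b, rng Phi b -> le_Phi Phi b0 b) /\
       is_Q_ultrametric (le_Phi Phi) b0 Phi))].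
Proof.
split.
- split; [exact: c1c2|exact: c2c1].
- split; [exact: c2c3|move=> h; apply: c4c2; exact: c3c4].
- split; [exact: c3c4|exact: c4c3].
Qed.
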